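(* Let $(E,\|\cdot\|)$ be a finite-dimensional normed space over $K$ and let $D\subseteq E$ be a one-dimensional subspace. Then for each $f\in D'$ with $\|f\|=1$ there exists an extension $\tilde f\in E'$ of $f$ with $\|\tilde f\|=1$ if and only if either $\|D\|\cap V_K=\emptyset$, or there is a subspace $F\subseteq E$ such that $E\cong D\oplus F$ (i.e. $E=D+F$ and $\|d+u\|=\max(\|d\|,\|u\|)$ for all $d\in D$, $u\in F$).
   Context: $K$ is a complete non-archimedean non-trivially valued field which is not spherically complete, with valuation group $V_K=\{|x|:x\in K\setminus\{0\}\}$. Normed spaces are non-archimedean normed spaces over $K$; $E'$ is the dual with operator norm. $\|D\|=\{\|d\|:d\in D\}$. *)

(* Defs.v *)
From HB Require Import structures.
From mathcomp Require Import all_boot all_order all_algebra.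
From mathcomp Require Import classical_sets reals.
Set Implicit Arguments. Unset Strict Implicit. Unset Printing Implicit Defensive.
Import Order.TTheory GRing.Theory Num.Theory.
Local Open Scope ring_scope.
Local Open Scope classical_set_scope.

Record na_abs (K : fieldType) (R : realType) (abs : K -> R) : Prop := {
  abs_ge0 : forall x, 0 <= abs x;
  abs_eq0 : forall x, (abs x = 0) <-> (x = 0);
  absM : forall x y, abs (x * y) = abs x * abs y;
  abs_ultra : forall x y, abs (x + y) <= Num.max (abs x) (abs y) }.

Definition nontrivial_abs (K : fieldType) (R : realType) (abs : K -> R) : Prop :=
  exists x : K, abs x != 0 /\ abs x != 1.

Definition complete_abs (K : fieldType) (R : realType) (abs : K -> R) : Prop :=
  forall u : nat -> K,
    (forall e : R, 0 < e -> exists M, forall m n, (M <= m)%N -> (M <= n)%N ->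
        abs (u m - u n) < e) ->
    exists l : K, forall e : R, 0 < e -> exists M, forall n, (M <= n)%N ->
        abs (u n - l) < e.

Definition cball (K : fieldType) (R : realType) (abs : K -> R) (a : K) (r : R)
  : set K := [set x | abs (x - a) <= r].

Definition spherically_complete (K : fieldType) (R : realType) (abs : K -> R)
  : Prop :=
  forall (a : nat -> K) (r : nat -> R),
    (forall n, 0 < r n) ->
    (forall n, cball abs (a n.+1) (r n.+1) `<=` cball abs (a n) (r n)) ->
    exists x, forall n, cball abs (a n) (r n) x.

Definition value_group (K : fieldType) (R : realType) (abs : K -> R) : set R :=
  [set abs x | x in [set x : K | x != 0]].

Record na_norm (K : fieldType) (R : realType) (abs : K -> R)
  (E : lmodType K) (N : E -> R) : Prop := {
  norm_ge0 : forall x, 0 <= N x;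
  norm_eq0 : forall x, (N x = 0) <-> (x = 0);
  normZ : forall (a : K) x, N (a *: x) = abs a * N x;
  norm_ultra : forall x y, N (x + y) <= Num.max (N x) (N y) }.

Definition linear_on (K : fieldType) (E : vectType K) (D : {vspace E})
  (f : E -> K) : Prop :=
  forall (a : K) x y, x \in D -> y \in D -> f (a *: x + y) = a * f x + f y.

(* f is a bounded (= continuous) linear functional on D, i.e. f ∈ D' *)
Definition in_dual (K : fieldType) (R : realType) (abs : K -> R)
  (E : vectType K) (N : E -> R) (D : {vspace E}) (f : E -> K) : Prop :=
  linear_on D f /\ exists C : R, forall x, x \in D -> abs (f x) <= C * N x.

Definition opnorm (K : fieldType) (R : realType) (abs : K -> R)
  (E : vectType K) (N : E -> R) (D : {vspace E}) (f : E -> K) : R :=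
  sup [set abs (f x) / N x | x in [set x : E | x \in D /\ x != 0]].

Definition norm_set (K : fieldType) (R : realType) (E : vectType K)
  (N : E -> R) (D : {vspace E}) : set R :=
  [set N d | d in [set d : E | d \in D]].

(* Main.v *)
Require Import Defs.
From HB Require Import structures.
From mathcomp Require Import all_boot all_order all_algebra.
From mathcomp Require Import boolp classical_sets reals.
From mathcomp Require Import ring lra.
Import Order.TTheory GRing.Theory Num.Theory.
Local Open Scope ring_scope.
Local Open Scope classical_set_scope.

Section Helpers.
Set Implicit Arguments.
Variables (R : realType) (K : fieldType) (abs : K -> R) (habs : na_abs abs).
Variables (E : vectType K) (N : E -> R) (hN : na_norm abs N).

Lemma abs1 : abs 1 = 1.
Proof.
have h := absM habs 1 1; rewrite mulr1 in h.
have h0 : abs 1 != 0 by apply/eqP => /(abs_eq0 habs) /eqP; rewrite oner_eq0.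
by apply: (mulIf h0); rewrite mul1r -h.
Qed.

Lemma absN1 : abs (-1) = 1.
Proof.
have h := absM habs (-1) (-1); rewrite mulrNN mulr1 abs1 in h.
have h0 := abs_ge0 habs (-1).
nra.
Qed.

Lemma N0 : N 0 = 0.
Proof. by apply/(norm_eq0 hN). Qed.

Lemma NN x : N (- x) = N x.
Proof. by rewrite -scaleN1r (normZ hN) absN1 mul1r. Qed.

Lemma Npos {x} : x != 0 -> 0 < N x.
Proof.
move=> hx; rewrite lt_neqAle (norm_ge0 hN) andbT eq_sym.
by apply/eqP => /(norm_eq0 hN) /eqP; rewrite (negbTE hx).
Qed.

Lemma lin0 {D : {vspace E}} {f} : linear_on D f -> f 0 = 0.
Proof.
move=> hf; have := hf 1 0 0 (mem0v D) (mem0v D).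
rewrite scale1r addr0 mul1r => h.
by have := congr1 (fun t => t - f 0) h; rewrite subrr addrK.
Qed.

Lemma linZ {D : {vspace E}} {f} a x : linear_on D f -> x \in D -> f (a *: x) = a * f x.
Proof.
move=> hf xD; have := hf a x 0 xD (mem0v D).
by rewrite addr0 (lin0 hf) addr0.
Qed.


Lemma abs0 : abs 0 = 0.
Proof. exact/(abs_eq0 habs). Qed.

Lemma dim1_line (D : {vspace E}) d :
  \dim D = 1%N -> d \in D -> d != 0 -> D = <[d]>%VS.
Proof.
move=> hD dD hd; have sub : (<[d]> <= D)%VS by rewrite -memvE.
apply/eqP; rewrite eq_sym -(dimv_leqif_eq sub).2 dim_vline hd hD.
by [].
Qed.

Lemma opnorm1_abs (D : {vspace E}) f : \dim D = 1%N -> in_dual abs N D f ->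
  opnorm abs N D f = 1 -> forall x, x \in D -> abs (f x) = N x.
Proof.
move=> hD [hf _] hop.
pose d0 := vpick D.
have d0D : d0 \in D by apply: memv_pick.
have d0n : d0 != 0 by rewrite vpick0 -dimv_eq0 hD.
have HD := dim1_line hD d0D d0n.
have key : forall x, x \in D -> x != 0 -> abs (f x) / N x = abs (f d0) / N d0.
  move=> x xD; move: (xD); rewrite HD => /vlineP[k xk] hx.
  have hk : k != 0 by apply: contraNneq hx => k0; rewrite xk k0 scale0r.
  have hak : abs k != 0 by apply/eqP => /(abs_eq0 habs) /eqP; rewrite (negbTE hk).
  rewrite xk (linZ k hf d0D) (normZ hN) (absM habs) invfM mulrACA divff ?mul1r //.
have Seq : [set abs (f x) / N x | x in [set x : E | x \in D /\ x != 0]] =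
   [set abs (f d0) / N d0].
  apply/seteqP; split => r /=.
    by case=> x [xD xn] <-; apply: key.
  by move=> ->; exists d0.
move: hop; rewrite /opnorm Seq sup1 => h1 x xD.
have [->|xn] := eqVneq x 0; first by rewrite (lin0 hf) abs0 N0.
have := key x xD xn; rewrite h1 => h.
by rewrite -[abs (f x)](divfK (lt0r_neq0 (Npos xn))) h mul1r.
Qed.

Lemma opnorm_le (D : {vspace E}) g : in_dual abs N D g ->
  opnorm abs N D g = 1 -> forall x, x \in D -> abs (g x) <= N x.
Proof.
move=> [hg [C hC]] hop x xD.
have [->|xn] := eqVneq x 0; first by rewrite (lin0 hg) abs0 N0.
have hs : has_sup [set abs (g x) / N x | x in [set x : E | x \in D /\ x != 0]].
  split; first by exists (abs (g x) / N x); exists x.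
  exists C => r [y [yD yn] <-].
  by rewrite ler_pdivrMr ?Npos // hC.
have := sup_upper_bound hs; move=> /(_ (abs (g x) / N x)).
rewrite -/(opnorm abs N D g) hop ler_pdivrMr ?Npos // mul1r; apply.
by exists x.
Qed.

Lemma opnorm_eq1 (D : {vspace E}) g x0 : x0 \in D -> x0 != 0 ->
  abs (g x0) = N x0 -> (forall x, x \in D -> abs (g x) <= N x) ->
  opnorm abs N D g = 1.
Proof.
move=> x0D x0n h0 hle.
have ub : ubound [set abs (g x) / N x | x in [set x : E | x \in D /\ x != 0]] 1.
  by move=> r [y [yD yn] <-]; rewrite ler_pdivrMr ?Npos // mul1r hle.
have ne : [set abs (g x) / N x | x in [set x : E | x \in D /\ x != 0]] (1 : R).
  by exists x0 => //; rewrite h0 divff // lt0r_neq0 // Npos.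
apply/le_anti/andP; split; first by apply: ge_sup => //; exists 1.
by apply: (sup_upper_bound (conj (ex_intro _ 1 ne) (ex_intro _ 1 ub))).
Qed.

End Helpers.

Theorem mainTheorem6 (R : realType) (K : fieldType) (abs : K -> R)
  (habs : na_abs abs) (hnt : nontrivial_abs abs) (hcomp : complete_abs abs)
  (hnsc : ~ spherically_complete abs)
  (E : vectType K) (N : E -> R) (hN : na_norm abs N)
  (D : {vspace E}) (hD : \dim D = 1%N) :
  (forall f : E -> K, in_dual abs N D f -> opnorm abs N D f = 1 ->
     exists g : E -> K, in_dual abs N fullv g /\ opnorm abs N fullv g = 1 /\
       (forall d, d \in D -> g d = f d))
  <->
  (norm_set N D `&` value_group abs = set0 \/
   exists F : {vspace E}, (D + F)%VS = fullv /\
     (forall d u, d \in D -> u \in F -> N (d + u) = Num.max (N d) (N u))).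
Proof.
split.
- move=> Hext.
  case: (pselect (norm_set N D `&` value_group abs = set0)) => [h|h]; [by left|right].
  have /set0P [r [[d dD Nd] [c cn absc]]] : norm_set N D `&` value_group abs != set0 by apply/eqP.
  have cn' : c != 0 by [].
  have dn : d != 0.
    apply: contraNneq cn' => d0; apply/eqP/(abs_eq0 habs); rewrite absc -Nd d0.
    exact: N0 hN.
  pose X := [tuple d].
  have freeX : free X by rewrite /= seq1_free.
  have cX : forall k, coord X ord0 (k *: d) = k.
    move=> k; rewrite linearZ /=.
    have := coord_free ord0 ord0 freeX; rewrite eqxx /= => ->.
    by rewrite mulr1.
  pose f x := coord X ord0 x * c.
  have hfl : linear_on D f.
    by move=> a x y _ _; rewrite /f linearD linearZ /=; ring.
  have HD := dim1_line hD dD dn.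
  have fnorm : forall x, x \in D -> abs (f x) = N x.
    by move=> x; rewrite HD => /vlineP[k ->]; rewrite /f cX (normZ hN) (absM habs) Nd absc.
  have hdual : in_dual abs N D f.
    by split => //; exists 1 => x xD; rewrite mul1r fnorm.
  have hop : opnorm abs N D f = 1.
    by apply: (opnorm_eq1 hN f dD dn (fnorm d dD)) => x xD; rewrite fnorm.
  case: (Hext f hdual hop) => g [gdual [gop gext]].
  have gle := opnorm_le habs hN gdual gop.
  have [hg _] := gdual.
  have lin_g : linear (g : E -> K^o).
    by move=> a x y; apply: hg; rewrite memvf.
  pose gL : {linear E -> K^o} :=
    HB.pack (g : E -> K^o) (GRing.isLinear.Build _ _ _ _ (g : E -> K^o) lin_g).
  exists (lker (linfun gL)).
  have memF u : (u \in lker (linfun gL)) = (g u == 0) by rewrite memv_ker lfunE.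
  have gd : g d = c by rewrite gext // /f -{1}[d]scale1r cX mul1r.
  have gD x y : g (x + y) = g x + g y.
    by have := hg 1 x y (memvf x) (memvf y); rewrite scale1r mul1r.
  have gZ k x : g (k *: x) = k * g x by apply: (linZ k (x:=x) hg); rewrite memvf.
  split.
  + apply/eqP; rewrite eqEsubv subvf /=; apply/subvP => x _.
    have -> : x = (g x / c) *: d + (x - (g x / c) *: d) by rewrite addrC subrK.
    apply: memv_add; first by rewrite memvZ.
    rewrite memF -scaleN1r gD gZ gZ gd divfK //.
    by apply/eqP; ring.
  + move=> d' u d'D uF; rewrite memF in uF.
    have e1 : abs (g (d' + u)) = N d'.
      by rewrite gD (eqP uF) addr0 gext // fnorm.
    have h1 : N d' <= N (d' + u) by rewrite -e1 gle ?memvf.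
    have h2 := norm_ultra hN d' u.
    have h3 : N u <= Num.max (N (d' + u)) (N d').
      have := norm_ultra hN (d' + u) (- d').
      by rewrite (NN habs hN) addrC addKr.
    apply/le_anti; rewrite h2 /= ge_max h1 /=.
    by move: h3; rewrite le_max => /orP[//|hh]; exact: le_trans hh h1.
- pose d0 := vpick D.
  have d0D : d0 \in D by apply: memv_pick.
  have d0n : d0 != 0 by rewrite vpick0 -dimv_eq0 hD.
  case => [Hdis | [F [DF orth]]] f fdual fop.
  + exfalso.
    have e := opnorm1_abs habs hN hD fdual fop d0D.
    have fn : f d0 != 0.
      apply/eqP => h0; move: e; rewrite h0 (abs0 habs) => /esym/(norm_eq0 hN)/eqP.
      by rewrite (negbTE d0n).
    have : (norm_set N D `&` value_group abs) (N d0).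
      by split; [exists d0 | exists (f d0)].
    by rewrite Hdis.
  + have capF : (D :&: F = 0)%VS.
      apply/eqP; rewrite -subv0; apply/subvP => x /memv_capP [xD xF]; rewrite memv0.
      have := orth x (- x) xD; rewrite memvN => /(_ xF).
      by rewrite subrr (N0 hN) (NN habs hN) maxxx => /esym/(norm_eq0 hN)/eqP.
    have fnorm := opnorm1_abs habs hN hD fdual fop.
    have [hf _] := fdual.
    pose g x := f (daddv_pi D F x).
    have gle : forall x, abs (g x) <= N x.
      move=> x; rewrite /g fnorm ?memv_pi //.
      have xs : daddv_pi D F x + daddv_pi F D x = x.
        by apply: daddv_pi_add capF _; rewrite DF memvf.
      by rewrite -{2}xs orth ?memv_pi // le_max lexx.
    have hlin : linear_on fullv g.
      by move=> a x y _ _; rewrite /g linearP /=; apply: hf; apply: memv_pi.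
    exists g; split; first by split => //; exists 1 => x _; rewrite mul1r gle.
    split; last by move=> d dD; rewrite /g daddv_pi_id.
    apply: (opnorm_eq1 hN g (memvf d0) d0n) => [|x _]; last exact: gle.
    by rewrite /g daddv_pi_id // fnorm.
Qed.
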